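(* Let $\sigma$ be a signature including $\{\triangleright, ;\}$ and let $\mathcal{A}$ be a $\sigma$-algebra. (1) If $\mathcal{A}$ has a join-complete representation by partial functions, then composition in $\mathcal{A}$ is completely left-distributive over joins: for every $S \subseteq \mathcal{A}$ with $\bigvee S$ existing and every $a\in\mathcal{A}$, $\bigvee\{a;s : s\in S\}$ exists and equals $a ; \bigvee S$. (2) If $\mathcal{A}$ has a meet-complete representation by partial functions, then composition in $\mathcal{A}$ is completely left-distributive over meets: for every nonempty $S\subseteq\mathcal{A}$ with $\bigwedge S$ existing and every $a\in\mathcal{A}$, $\bigwedge\{a;s:s\in S\}$ exists and equals $a;\bigwedge S$.
   Context: Signatures $\sigma$ are sets of operation symbols drawn from: $\triangleright$ (antidomain restriction), $;$ (composition), $\wedge$ (intersection), $\mathrm{upd}$ (update), $\sqcup$ (preferential union), $\mathsf{D}$ (domain), $\mathsf{A}$ (antidomain), interpreted on partial functions as: $f \triangleright g = \{(x,y) \in g : x \notin \mathrm{dom}(f)\}$; $f;g=\{(x,z):\exists y\,((x,y)\in f,(y,z)\in g)\}$; $f\wedge g = f\cap g$; $\mathrm{upd}(f,g)(x)$ is $f(x)$ if $f(x)$ defined and $g(x)$ undefined, $g(x)$ if both defined, undefined otherwise; $(f\sqcup g)(x)$ is $f(x)$ if defined, else $g(x)$; $\mathsf{D}(f)$ = identity on $\mathrm{dom}(f)$; $\mathsf{A}(f)$ = identity on the complement of $\mathrm{dom}(f)$ in the base. A representation by partial functions is an isomorphism onto a $\sigma$-algebra of partial functions with these operations. Define $0 :=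 a\triangleright a$, $a\lhd b := (a\triangleright b)\triangleright b$, $a \le b :\iff a\lhd b = a$; for representable algebras this is a partial order and $a\le b\iff\theta(a)\subseteq\theta(b)$. $\theta$ is join complete if $\theta(\bigvee S)=\bigcup\theta[S]$ whenever $\bigvee S$ exists; meet complete if $\theta(\bigwedge S)=\bigcap\theta[S]$ whenever $S$ is nonempty and $\bigwedge S$ exists. *)

(* Defs.v *)
Inductive sym : Type :=
  | SRestr  (* antidomain restriction  |>  *)
  | SComp
  | SMeet
  | SUpd
  | SPref   (* preferential union        *)
  | SDom
  | SADom.

(** Only the operations
    whose symbol is in [sig] are part of the algebra; the interpretations
    of the other symbols are never used. *)
Record sigma_alg : Type := {
  car : Type;
  sig : sym -> Prop;
  op_restr : car -> car -> car;
  op_comp  : car -> car -> car;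
  op_meet  : car -> car -> car;
  op_upd   : car -> car -> car;
  op_pref  : car -> car -> car;
  op_dom   : car -> car;
  op_adom  : car -> car
}.

(** Partial functions on a base X, given by their graphs. *)
Definition rel (X : Type) := X -> X -> Prop.
Definition functional {X : Type} (f : rel X) : Prop :=
  forall x y z, f x y -> f x z -> y = z.
Definition in_dom {X : Type} (f : rel X) (x : X) : Prop := exists y, f x y.
Definition releq {X : Type} (f g : rel X) : Prop := forall x y, f x y <-> g x y.

Definition pf_restr {X} (f g : rel X) : rel X :=
  fun x y => g x y /\ ~ in_dom f x.
Definition pf_comp {X} (f g : rel X) : rel X :=
  fun x z => exists y, f x y /\ g y z.
Definition pf_meet {X} (f g : rel X) : rel X :=
  fun x y => f x y /\ g x y.
Definition pf_upd {X} (f g : rel X) : rel X :=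
  fun x y => (f x y /\ ~ in_dom g x) \/ (in_dom f x /\ g x y).
Definition pf_pref {X} (f g : rel X) : rel X :=
  fun x y => f x y \/ (~ in_dom f x /\ g x y).
Definition pf_D {X} (f : rel X) : rel X :=
  fun x y => x = y /\ in_dom f x.
Definition pf_A {X} (f : rel X) : rel X :=
  fun x y => x = y /\ ~ in_dom f x.

Definition is_rep (A : sigma_alg) (X : Type) (theta : car A -> rel X) : Prop :=
  (forall a, functional (theta a)) /\
  (forall a b, releq (theta a) (theta b) -> a = b) /\
  (sig A SRestr -> forall a b,
     releq (theta (op_restr A a b)) (pf_restr (theta a) (theta b))) /\
  (sig A SComp -> forall a b,
     releq (theta (op_comp A a b)) (pf_comp (theta a) (theta b))) /\
  (sig A SMeet -> forall a b,
     releq (theta (op_meet A a b)) (pf_meet (theta a) (theta b))) /\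
  (sig A SUpd -> forall a b,
     releq (theta (op_upd A a b)) (pf_upd (theta a) (theta b))) /\
  (sig A SPref -> forall a b,
     releq (theta (op_pref A a b)) (pf_pref (theta a) (theta b))) /\
  (sig A SDom -> forall a,
     releq (theta (op_dom A a)) (pf_D (theta a))) /\
  (sig A SADom -> forall a,
     releq (theta (op_adom A a)) (pf_A (theta a))).

(** a <| b := (a |> b) |> b ;  a <= b :<-> a <| b = a *)
Definition alg_le (A : sigma_alg) (a b : car A) : Prop :=
  op_restr A (op_restr A a b) b = a.

Definition is_lub (A : sigma_alg) (S : car A -> Prop) (j : car A) : Prop :=
  (forall s, S s -> alg_le A s j) /\
  (forall u, (forall s, S s -> alg_le A s u) -> alg_le A j u).
Definition is_glb (A : sigma_alg) (S : car A -> Prop) (m : car A) : Prop :=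
  (forall s, S s -> alg_le A m s) /\
  (forall u, (forall s, S s -> alg_le A u s) -> alg_le A u m).

Definition join_complete (A : sigma_alg) (X : Type) (theta : car A -> rel X) : Prop :=
  forall (S : car A -> Prop) (j : car A), is_lub A S j ->
    forall x y, theta j x y <-> exists s, S s /\ theta s x y.
Definition meet_complete (A : sigma_alg) (X : Type) (theta : car A -> rel X) : Prop :=
  forall (S : car A -> Prop) (m : car A), (exists s, S s) -> is_glb A S m ->
    forall x y, theta m x y <-> forall s, S s -> theta s x y.

Definition lcomp_set (A : sigma_alg) (a : car A) (S : car A -> Prop) : car A -> Prop :=
  fun t => exists s, S s /\ t = op_comp A a s.

(* Main.v *)
Require Import Defs.
From Stdlib Require Import Classical.

Lemma le_iff (A : sigma_alg) X theta (HsigR : sig A SRestr) :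
  is_rep A X theta -> forall a b,
  alg_le A a b <-> (forall x y, theta a x y -> theta b x y).
Proof.
  intros [Hf [Hinj [HR _]]] a b. specialize (HR HsigR).
  assert (E : forall x y, theta (op_restr A (op_restr A a b) b) x y <->
                          theta b x y /\ in_dom (theta a) x).
  { intros x y. split.
    - intros H0. apply (HR _ _ x y) in H0. destruct H0 as [H1 H2]. split; [exact H1|].
      destruct (Classical_Prop.classic (in_dom (theta a) x)) as [h|h]; [exact h|].
      exfalso; apply H2. exists y. apply (HR a b x y). split; auto.
    - intros [H1 [z Hz]]. apply (HR _ _ x y). split; [exact H1|]. intros [w Hw].
      apply (HR a b x w) in Hw. destruct Hw as [_ Hw]. apply Hw. exists z; auto. }
  unfold alg_le. split.
  - intros H x y Hxy. rewrite <- H in Hxy. apply E in Hxy. tauto.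
  - intros H. apply Hinj. intros x y. split.
    + intros H2. apply E in H2. destruct H2 as [H1 [z Hz]]. pose proof (H _ _ Hz). rewrite (Hf b x y z H1 H0). exact Hz.
    + intros Hxy. apply E. split; [auto| exists y; auto].
Qed.

Theorem lemma5p5 (A : sigma_alg) (HsigR : sig A SRestr) (HsigC : sig A SComp) :
  ((exists (X : Type) (theta : car A -> rel X),
       is_rep A X theta /\ join_complete A X theta) ->
     forall (S : car A -> Prop) (j a : car A), is_lub A S j ->
       is_lub A (lcomp_set A a S) (op_comp A a j)) /\
  ((exists (X : Type) (theta : car A -> rel X),
       is_rep A X theta /\ meet_complete A X theta) ->
     forall (S : car A -> Prop) (m a : car A), (exists s, S s) -> is_glb A S m ->
       is_glb A (lcomp_set A a S) (op_comp A a m)).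
Proof.
  split.
  - intros [X [theta [Hr Hjc]]] S j a Hl.
    pose proof (le_iff A X theta HsigR Hr) as L.
    destruct Hr as [Hf [Hinj [HR [HC _]]]]. specialize (HC HsigC).
    pose proof (Hjc S j Hl) as J.
    destruct Hl as [Hub Hleast]. split.
    + intros t [s [Hs ->]]. apply L. intros x y H.
      apply HC in H. apply HC. destruct H as [z [H1 H2]]. exists z. split; auto.
      apply (proj1 (L s j)); auto.
    + intros u Hu. apply L. intros x y H. apply HC in H.
      destruct H as [z [H1 H2]]. apply J in H2. destruct H2 as [s [Hs H2]].
      apply (proj1 (L _ u) (Hu (op_comp A a s) (ex_intro _ s (conj Hs eq_refl)))).
      apply HC. exists z; auto.
  - intros [X [theta [Hr Hmc]]] S m a Hne Hg.
    pose proof (le_iff A X theta HsigR Hr) as L.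
    destruct Hr as [Hf [Hinj [HR [HC _]]]]. specialize (HC HsigC).
    pose proof (Hmc S m Hne Hg) as M.
    destruct Hg as [Hlb Hgreat]. split.
    + intros t [s [Hs ->]]. apply L. intros x y H.
      apply HC in H. apply HC. destruct H as [z [H1 H2]]. exists z. split; auto.
      apply (proj1 (L m s)); auto.
    + intros u Hu. apply L. intros x y H.
      assert (Hs : forall s, S s -> exists z, theta a x z /\ theta s z y).
      { intros s Hs. apply HC.
        apply (proj1 (L u _) (Hu (op_comp A a s) (ex_intro _ s (conj Hs eq_refl)))).
        exact H. }
      destruct Hne as [s0 Hs0]. destruct (Hs s0 Hs0) as [z0 [Ha0 _]].
      apply HC. exists z0. split; auto. apply M. intros s Hs1.
      destruct (Hs s Hs1) as [z [Ha Hz]]. rewrite (Hf a x z0 z Ha0 Ha). exact Hz.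
Qed.
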